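(* Let $D$ be a non-commutative division ring and $R$ a maximal subring of $D$. Assume there exists a nonzero non-unit $a\in R$ with $aR=Ra$. Then: (1) $X=\{1,a,a^2,\ldots\}$ is a left and right Ore set in $R$, and $D=X^{-1}R=\{a^{-n}r: n\ge 0, r\in R\}$ and $D=RX^{-1}=\{ra^{-n}: n\ge 0, r\in R\}$; (2) every nonzero left ideal and every nonzero right ideal of $R$ contains a power of $a$; in particular $u.\dim({}_RR)=u.\dim(R_R)=1$ and $R$ is an Ore domain whose division ring of quotients is $D$; (3) every nonzero prime ideal of $R$ contains $a$; (4) $a\in J(R)$; (5) $R$ is a non-simple $G$-domain; (6) for every $\lambda\in N(R)$, either $\lambda\in R$ or $\lambda^{-1}\in R$.
   Context: All rings are associative unital and subrings share the identity. A maximal subring of a ring $T$ is a proper subring maximal under inclusion among proper subrings of $T$. $J(R)$ is the Jacobson radical, $u.\dim$ is uniform (Goldie) dimension. $N(R)=\{x\in D: xR=Rx\}$. A $G$-domain is a domain in which the intersection of all nonzero prime ideals is nonzero. *)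

(* Defs.v *)
(* A division ring is a unitRingType in which every nonzero
   element is a unit; subsets of D (subrings, ideals of a subring) are Prop
   predicates D -> Prop. *)
From mathcomp Require Import all_boot all_algebra.
Set Implicit Arguments. Unset Strict Implicit. Unset Printing Implicit Defensive.
Import GRing.Theory.
Local Open Scope ring_scope.

Section Defs.
Variable D : unitRingType.

Definition is_division_ring : Prop := forall x : D, x != 0 -> x \is a GRing.unit.
Definition noncommutative : Prop := exists x y : D, x * y != y * x.

Definition is_subring (S : D -> Prop) : Prop :=
  S 1 /\ (forall x y, S x -> S y -> S (x - y)) /\ (forall x y, S x -> S y -> S (x * y)).

Definition maximal_subring (R : D -> Prop) : Prop :=
  is_subring R /\ (exists x, ~ R x) /\
  forall S, is_subring S -> (forall x, R x -> S x) -> (exists x, ~ S x) ->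
    forall x, S x -> R x.

Definition unit_in (R : D -> Prop) (a : D) : Prop :=
  exists b, R b /\ a * b = 1 /\ b * a = 1.

Definition normalizes (R : D -> Prop) (x : D) : Prop :=
  forall y, (exists r, R r /\ y = x * r) <-> (exists r, R r /\ y = r * x).

Definition N_of (R : D -> Prop) (x : D) : Prop := normalizes R x.

Definition left_ideal (R I : D -> Prop) : Prop :=
  (forall x, I x -> R x) /\ I 0 /\ (forall x y, I x -> I y -> I (x - y)) /\
  (forall r x, R r -> I x -> I (r * x)).
Definition right_ideal (R I : D -> Prop) : Prop :=
  (forall x, I x -> R x) /\ I 0 /\ (forall x y, I x -> I y -> I (x - y)) /\
  (forall r x, R r -> I x -> I (x * r)).
Definition ideal (R I : D -> Prop) : Prop := left_ideal R I /\ right_ideal R I.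

Definition nonzero_set (I : D -> Prop) : Prop := exists x, I x /\ x != 0.
Definition proper_in (R I : D -> Prop) : Prop := exists x, R x /\ ~ I x.

(* prime ideal of R: proper two-sided ideal P with  A B <= P  ==> A <= P or B <= P
   for two-sided ideals A, B (A B <= P iff all products x y lie in P, P additive) *)
Definition prime_ideal (R P : D -> Prop) : Prop :=
  ideal R P /\ proper_in R P /\
  forall A B, ideal R A -> ideal R B ->
    (forall x y, A x -> B y -> P (x * y)) ->
    (forall x, A x -> P x) \/ (forall x, B x -> P x).

Definition maximal_left_ideal (R M : D -> Prop) : Prop :=
  left_ideal R M /\ proper_in R M /\
  forall I, left_ideal R I -> proper_in R I -> (forall x, M x -> I x) ->
    forall x, I x -> M x.

Definition jacobson (R : D -> Prop) (x : D) : Prop :=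
  R x /\ forall M, maximal_left_ideal R M -> M x.

Definition mult_subset (R X : D -> Prop) : Prop :=
  (forall x, X x -> R x) /\ X 1 /\ (forall x y, X x -> X y -> X (x * y)).
Definition left_ore_set (R X : D -> Prop) : Prop :=
  mult_subset R X /\
  (forall r x, R r -> X x -> exists r' x', R r' /\ X x' /\ x' * r = r' * x) /\
  (forall r x, R r -> X x -> r * x = 0 -> exists x', X x' /\ x' * r = 0).
Definition right_ore_set (R X : D -> Prop) : Prop :=
  mult_subset R X /\
  (forall r x, R r -> X x -> exists r' x', R r' /\ X x' /\ r * x' = x * r') /\
  (forall r x, R r -> X x -> x * r = 0 -> exists x', X x' /\ r * x' = 0).

(* uniform dimension 1: R contains a nonzero (left/right) ideal, and no two
   nonzero (left/right) ideals form a direct sum *)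
Definition udim_left_one (R : D -> Prop) : Prop :=
  (exists I, left_ideal R I /\ nonzero_set I) /\
  forall I J, left_ideal R I -> left_ideal R J -> nonzero_set I -> nonzero_set J ->
    exists x, x != 0 /\ I x /\ J x.
Definition udim_right_one (R : D -> Prop) : Prop :=
  (exists I, right_ideal R I /\ nonzero_set I) /\
  forall I J, right_ideal R I -> right_ideal R J -> nonzero_set I -> nonzero_set J ->
    exists x, x != 0 /\ I x /\ J x.

Definition domain_in (R : D -> Prop) : Prop :=
  forall x y, R x -> R y -> x * y = 0 -> x = 0 \/ y = 0.
Definition left_ore_cond (R : D -> Prop) : Prop :=
  forall x y, R x -> R y -> y != 0 -> exists r s, R r /\ R s /\ s != 0 /\ s * x = r * y.
Definition right_ore_cond (R : D -> Prop) : Prop :=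
  forall x y, R x -> R y -> y != 0 -> exists r s, R r /\ R s /\ s != 0 /\ x * s = y * r.
Definition ore_domain_with_quotients (R : D -> Prop) : Prop :=
  domain_in R /\ left_ore_cond R /\ right_ore_cond R /\
  (forall s, R s -> s != 0 -> s \is a GRing.unit) /\
  (forall d, exists r s, R r /\ R s /\ s != 0 /\ d = s^-1 * r) /\
  (forall d, exists r s, R r /\ R s /\ s != 0 /\ d = r * s^-1).

Definition non_simple (R : D -> Prop) : Prop :=
  exists I, ideal R I /\ nonzero_set I /\ proper_in R I.

Definition G_domain (R : D -> Prop) : Prop :=
  domain_in R /\
  exists x, x != 0 /\ R x /\ forall P, prime_ideal R P -> nonzero_set P -> P x.

End Defs.

(* Main.v *)
Require Import Defs.
From mathcomp Require Import all_boot all_algebra.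
From Stdlib Require Import Classical ClassicalEpsilon.
Import GRing.Theory.
Local Open Scope ring_scope.
Set Implicit Arguments. Unset Strict Implicit.

Section Main.
Variable D : unitRingType.
Variable R : D -> Prop.
Variable a : D.
Hypothesis hdiv : is_division_ring D.
Hypothesis hmax : maximal_subring R.
Hypothesis Ra : R a.
Hypothesis a0 : a != 0.
Hypothesis anu : ~ unit_in R a.
Hypothesis anorm : normalizes R a.

Lemma sR : is_subring R. Proof. by case: hmax. Qed.
Lemma R1 : R 1. Proof. by case: sR. Qed.
Lemma RB x y : R x -> R y -> R (x - y). Proof. by case: sR => _ [h1 h2]; auto. Qed.
Lemma RM x y : R x -> R y -> R (x * y). Proof. by case: sR => _ [h1 h2]; auto. Qed.
Lemma R0 : R 0. Proof. have h := RB R1 R1. by rewrite subrr in h. Qed.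
Lemma RN x : R x -> R (- x). Proof. by move=> h; rewrite -sub0r; apply: RB => //; apply: R0. Qed.
Lemma RD x y : R x -> R y -> R (x + y).
Proof. by move=> hx hy; rewrite -(opprK y); apply: RB => //; apply: RN. Qed.
Lemma RX n : R (a ^+ n).
Proof. elim: n => [|n IH]; first by rewrite expr0; apply: R1. by rewrite exprS; apply: RM. Qed.

Lemma unitD (x : D) : x != 0 -> x \is a GRing.unit. Proof. exact: hdiv. Qed.
Lemma aU : a \is a GRing.unit. Proof. exact: unitD. Qed.
Lemma aXU n : a ^+ n \is a GRing.unit. Proof. exact: unitrX aU. Qed.
Lemma aX0 n : a ^+ n != 0.
Proof. apply/eqP => h; have := aXU n; rewrite h unitr0 //. Qed.

Lemma right_inv (x y : D) : x \is a GRing.unit -> x * y = 1 -> y = x^-1.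
Proof. by move=> hx h; rewrite -(mulKr hx y) h mulr1. Qed.
Lemma left_inv (x y : D) : x \is a GRing.unit -> y * x = 1 -> y = x^-1.
Proof. by move=> hx h; rewrite -(mulrK hx y) h mul1r. Qed.

Lemma not_ra r : R r -> r * a <> 1.
Proof.
move=> hr h; apply: anu; exists r; split => //; split => //.
by rewrite (left_inv aU h) mulrV // aU.
Qed.
Lemma not_ar r : R r -> a * r <> 1.
Proof.
move=> hr h; apply: anu; exists r; split => //; split => //.
by rewrite (right_inv aU h) mulVr // aU.
Qed.

Lemma domD (x y : D) : x * y = 0 -> x = 0 \/ y = 0.
Proof.
move=> h; case: (eqVneq x 0) => [->|hx]; [by left|right].
by rewrite -(mulKr (unitD hx) y) h mulr0.
Qed.

Definition nl (x : D) := forall r, R r -> exists r', R r' /\ x * r = r' * x.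
Definition nr (x : D) := forall r, R r -> exists r', R r' /\ r * x = x * r'.

Lemma norm_nl x : normalizes R x -> nl x.
Proof. by move=> h r hr; case: (proj1 (h (x * r))) => [|r' [h1 h2]]; [exists r|exists r']. Qed.
Lemma norm_nr x : normalizes R x -> nr x.
Proof. by move=> h r hr; case: (proj2 (h (r * x))) => [|r' [h1 h2]]; [exists r|exists r']. Qed.

Lemma nlX x n : nl x -> nl (x ^+ n).
Proof.
move=> h; elim: n => [|n IH] r hr; first by exists r; rewrite expr0 mulr1 mul1r.
case: (IH r hr) => r1 [h1 e1]; case: (h r1 h1) => r2 [h2 e2].
by exists r2; split => //; rewrite exprS -mulrA e1 mulrA e2 mulrA.
Qed.
Lemma nrX x n : nr x -> nr (x ^+ n).
Proof.
move=> h; elim: n => [|n IH] r hr; first by exists r; rewrite expr0 mulr1 mul1r.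
case: (h r hr) => r1 [h1 e1]; case: (IH r1 h1) => r2 [h2 e2].
by exists r2; split => //; rewrite exprS mulrA e1 -mulrA e2 mulrA.
Qed.
Lemma nlV x : x \is a GRing.unit -> nr x -> nl x^-1.
Proof.
move=> hx h r hr; case: (h r hr) => r1 [h1 e1]; exists r1; split => //.
apply: (mulIr hx); rewrite mulrVK // -mulrA e1 mulKr //.
Qed.
Lemma nrV x : x \is a GRing.unit -> nl x -> nr x^-1.
Proof.
move=> hx h r hr; case: (h r hr) => r1 [h1 e1]; exists r1; split => //.
apply: (mulrI hx); rewrite mulVKr // mulrA e1 mulrK //.
Qed.

Lemma anl n : nl (a ^+ n). Proof. exact/nlX/norm_nl. Qed.
Lemma anr n : nr (a ^+ n). Proof. exact/nrX/norm_nr. Qed.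
Lemma ainl n : nl (a ^- n). Proof. by rewrite -exprVn; apply/nlX/nlV/norm_nr => //; apply aU. Qed.
Lemma ainr n : nr (a ^- n). Proof. by rewrite -exprVn; apply/nrX/nrV/norm_nl => //; apply aU. Qed.


Lemma expV_shift n k : a ^- (n + k) * a ^+ k = a ^- n.
Proof. by rewrite addnC exprD invrM ?aXU // mulrVK // aXU. Qed.
Lemma expV_add n m : a ^- n * a ^- m = a ^- (m + n).
Proof. by rewrite exprD invrM ?aXU. Qed.

Definition Sset (d : D) := exists n r, R r /\ d = a ^- n * r.

Lemma Ssub : is_subring Sset.
Proof.
split; first by exists 0%N, 1; split; [apply: R1|rewrite expr0 invr1 mul1r].
split.
  move=> x y [n [r [hr ->]]] [m [s [hs ->]]].
  exists (n + m)%N, (a ^+ m * r - a ^+ n * s); split.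
    by apply: RB; apply: RM => //; apply: RX.
  by rewrite mulrBr !mulrA expV_shift addnC expV_shift.
move=> x y [n [r [hr ->]]] [m [s [hs ->]]].
case: (ainr m hr) => r' [hr' e].
exists (m + n)%N, (r' * s); split; first by apply: RM.
by rewrite -mulrA (mulrA r) e -!mulrA mulrA expV_add.
Qed.

Lemma DS d : Sset d.
Proof.
case: (classic (exists x, ~ Sset x)) => [H|H]; last first.
  by apply: NNPP => h; apply: H; exists d.
case: hmax => _ [_ hm].
have hRS : forall x, R x -> Sset x.
  by move=> x hx; exists 0%N, x; split => //; rewrite expr0 invr1 mul1r.
have hSR := hm Sset Ssub hRS H.
have : R (a ^-1).
  apply: hSR; exists 1%N, 1; split; first by apply: R1.
  by rewrite expr1 mulr1.
move=> h; exfalso; apply: (not_ar h); rewrite mulrV //; apply: aU.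
Qed.

Lemma DSl d : exists n r, R r /\ d = a ^- n * r.
Proof. exact: DS. Qed.
Lemma DSr d : exists n r, R r /\ d = r * a ^- n.
Proof.
case: (DS d) => n [r [hr ->]]; case: (ainl n hr) => r' [hr' e].
by exists n, r'.
Qed.


Lemma left_pow I : left_ideal R I -> nonzero_set I -> exists n, I (a ^+ n).
Proof.
move=> [_ [_ [_ hI]]] [x [hx x0]].
case: (DSl x^-1) => n [r [hr ex]]; exists n.
have e : r = a ^+ n * x^-1 by rewrite ex mulVKr // aXU.
have -> : a ^+ n = r * x by rewrite e mulrVK // unitD.
by apply: hI.
Qed.

Lemma right_pow I : right_ideal R I -> nonzero_set I -> exists n, I (a ^+ n).
Proof.
move=> [_ [_ [_ hI]]] [x [hx x0]].
case: (DSr x^-1) => n [r [hr ex]]; exists n.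
have e : r = x^-1 * a ^+ n by rewrite ex mulrVK // aXU.
have -> : a ^+ n = x * r by rewrite e mulVKr // unitD.
by apply: hI.
Qed.

Lemma RR_left : left_ideal R R.
Proof. split => //; split; first exact: R0. by split; [apply: RB|apply: RM]. Qed.
Lemma RR_right : right_ideal R R.
Proof. split => //; split; first exact: R0. by split; [apply: RB|move=> r x hr hx; apply: RM]. Qed.

Lemma oner0 : (1 : D) != 0. Proof. exact: oner_neq0. Qed.

Lemma udimL : udim_left_one R.
Proof.
split; first by exists R; split; [apply: RR_left|exists 1; split; [apply: R1|apply: oner0]].
move=> I J hI hJ nI nJ.
case: (left_pow hI nI) => n hn; case: (left_pow hJ nJ) => m hm.
exists (a ^+ (m + n)); split; first exact: aX0.
case: hI => _ [_ [_ hI]]; case: hJ => _ [_ [_ hJ]].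
split; first by rewrite exprD; apply: hI => //; apply: RX.
by rewrite addnC exprD; apply: hJ => //; apply: RX.
Qed.

Lemma udimR : udim_right_one R.
Proof.
split; first by exists R; split; [apply: RR_right|exists 1; split; [apply: R1|apply: oner0]].
move=> I J hI hJ nI nJ.
case: (right_pow hI nI) => n hn; case: (right_pow hJ nJ) => m hm.
exists (a ^+ (n + m)); split; first exact: aX0.
case: hI => _ [_ [_ hI]]; case: hJ => _ [_ [_ hJ]].
split; first by rewrite exprD; apply: hI => //; apply: RX.
by rewrite addnC exprD; apply: hJ => //; apply: RX.
Qed.

Lemma oreQ : ore_domain_with_quotients R.
Proof.
split; first by move=> x y _ _; apply: domD.
split.
  move=> x y hx hy y0; case: (DSl (x * y^-1)) => n [r [hr e]].
  exists r, (a ^+ n); split => //; split; first exact: RX.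
  split; first exact: aX0.
  have -> : r = a ^+ n * (x * y^-1) by rewrite e mulVKr // aXU.
  by rewrite !mulrA mulrVK // unitD.
split.
  move=> x y hx hy y0; case: (DSr (y^-1 * x)) => n [r [hr e]].
  exists r, (a ^+ n); split => //; split; first exact: RX.
  split; first exact: aX0.
  have -> : r = y^-1 * x * a ^+ n by rewrite e mulrVK // aXU.
  by rewrite !mulrA mulrV ?mul1r // unitD.
split; first by move=> s _ s0; apply: unitD.
split.
  move=> d; case: (DSl d) => n [r [hr e]]; exists r, (a ^+ n).
  by split => //; split; [apply: RX|split; [apply: aX0|]].
move=> d; case: (DSr d) => n [r [hr e]]; exists r, (a ^+ n).
by split => //; split; [apply: RX|split; [apply: aX0|]].
Qed.


Definition Iset k (y : D) := exists r, R r /\ y = a ^+ k * r.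

Lemma Iideal k : ideal R (Iset k).
Proof.
have h1 : forall x, Iset k x -> R x by move=> x [r [hr ->]]; apply: RM => //; apply: RX.
have h2 : Iset k 0 by exists 0; split; [apply: R0|rewrite mulr0].
have h3 : forall x y, Iset k x -> Iset k y -> Iset k (x - y).
  by move=> x y [r [hr ->]] [s [hs ->]]; exists (r - s); split; [apply: RB|rewrite mulrBr].
split; split => //; split => //; split => //.
  move=> s x hs [r [hr ->]]; case: (anr k hs) => s' [hs' e].
  by exists (s' * r); split; [apply: RM|rewrite mulrA e mulrA].
move=> s x hs [r [hr ->]].
by exists (r * s); split; [apply: RM|rewrite mulrA].
Qed.

Lemma prime_a P : prime_ideal R P -> nonzero_set P -> P a.
Proof.
move=> [[hL hRi] [_ hp]] nz.
case: (left_pow hL nz) => n hn.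
case: hRi => _ [_ [_ hRm]].
elim: n hn => [|k IH] hk.
  by rewrite -(mul1r a); apply: hRm => //; rewrite -(expr0 a).
case: (hp (Iset 1) (Iset k) (Iideal 1) (Iideal k)).
- move=> x y [r [hr ->]] [s [hs ->]].
  case: (anr k hr) => r' [hr' e].
  have -> : a ^+ 1 * r * (a ^+ k * s) = a ^+ k.+1 * (r' * s).
    by rewrite -mulrA (mulrA r) e -!mulrA expr1 mulrA -exprS.
  by apply: hRm => //; apply: RM.
- move=> h; have := h (a ^+ 1 * 1); rewrite expr1 mulr1; apply.
  by exists 1; split; [apply: R1|rewrite expr1 mulr1].
- move=> h; apply: IH; have := h (a ^+ k * 1); rewrite mulr1; apply.
  by exists 1; split; [apply: R1|rewrite mulr1].
Qed.

Lemma Ladd L x y : left_ideal R L -> L x -> L y -> L (x + y).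
Proof.
move=> [_ [h0 [hB _]]] hx hy.
have hny : L (- y) by rewrite -sub0r; apply: hB.
by have := hB _ _ hx hny; rewrite opprK.
Qed.

Lemma down L m r : left_ideal R L -> L m -> R r -> 1 = m + r * a ->
  forall k, L (a ^+ k) -> L 1.
Proof.
move=> hL hm hr e k; elim: k => [|k IH] hk; first by rewrite expr0 in hk.
apply: IH.
have [hsub [_ [_ hLm]]] := hL.
case: (anl k hr) => r' [hr' e'].
have -> : a ^+ k = a ^+ k * m + r' * a ^+ k.+1.
  by rewrite exprSr mulrA -e' -mulrA -mulrDr -e mulr1.
apply: Ladd => //; apply: hLm => //; apply: RX.
Qed.

Lemma unit_1sa s : R s -> exists w, R w /\ w * (1 - s * a) = 1.
Proof.
move=> hs.
have hu : R (1 - s * a) by apply: RB; [apply: R1|apply: RM].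
pose L x := exists t, R t /\ x = t * (1 - s * a).
have hL : left_ideal R L.
  split; first by move=> x [t [ht ->]]; apply: RM.
  split; first by exists 0; split; [apply: R0|rewrite mul0r].
  split; first by move=> x y [t [ht ->]] [t' [ht' ->]]; exists (t - t'); split; [apply: RB|rewrite mulrBl].
  by move=> r x hr [t [ht ->]]; exists (r * t); split; [apply: RM|rewrite mulrA].
have hm : L (1 - s * a) by exists 1; split; [apply: R1|rewrite mul1r].
have nz : nonzero_set L.
  exists (1 - s * a); split => //; apply/eqP => h.
  by apply: (not_ra hs); apply/eqP; rewrite eq_sym -subr_eq0 h.
case: (left_pow hL nz) => k hk.
have := down hL hm hs (esym (subrK _ _)) hk.
by move=> [t [ht e]]; exists t.
Qed.

Lemma jac : jacobson R a.
Proof.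
split => //; move=> M [hM [hprop hmM]].
apply: NNPP => nMa.
pose I x := exists m r, M m /\ R r /\ x = m + r * a.
have [hMR [hM0 [hMB hMm]]] := hM.
have hI : left_ideal R I.
  split; first by move=> x [m [r [hm [hr ->]]]]; apply: RD; [apply: hMR|apply: RM].
  split; first by exists 0, 0; split => //; split; [apply: R0|rewrite mul0r addr0].
  split.
    move=> x y [m [r [hm [hr ->]]]] [m' [r' [hm' [hr' ->]]]].
    exists (m - m'), (r - r'); split; first by apply: hMB.
    split; first by apply: RB.
    by rewrite mulrBl opprD addrACA.
  move=> s x hs [m [r [hm [hr ->]]]].
  exists (s * m), (s * r); split; first by apply: hMm.
  by split; [apply: RM|rewrite mulrDr mulrA].
have MI : forall x, M x -> I x.
  by move=> x hx; exists x, 0; split => //; split; [apply: R0|rewrite mul0r addr0].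
case: (classic (proper_in R I)) => hpI.
  apply: nMa; apply: (hmM I hI hpI MI).
  by exists 0, 1; split => //; split; [apply: R1|rewrite mul1r add0r].
have : I 1.
  apply: NNPP => h; apply: hpI; exists 1; split => //; apply: R1.
move=> [m [r [hm [hr e]]]].
case: (eqVneq m 0) => [m0|m0].
  by apply: (not_ra hr); rewrite e m0 add0r.
case: (left_pow hM (ex_intro _ m (conj hm m0))) => k hk.
have M1 := down hM hm hr e hk.
case: hprop => x [hx nx]; apply: nx.
by rewrite -(mulr1 x); apply: hMm.
Qed.

Lemma nonsimple : non_simple R.
Proof.
exists (Iset 1); split; first exact: Iideal.
split; first by exists a; split; [exists 1; split; [apply: R1|rewrite expr1 mulr1]|].
exists 1; split; first exact: R1.
by move=> [r [hr e]]; apply: (not_ar hr); rewrite e expr1.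
Qed.

Lemma Gdom : G_domain R.
Proof.
split; first by move=> x y _ _; apply: domD.
by exists a; split => //; split => //; apply: prime_a.
Qed.


Lemma fchoice (P : nat -> D -> Prop) : (forall j, exists y, P j y) -> exists f, forall j, P j (f j).
Proof.
move=> H; exists (fun j => proj1_sig (constructive_indefinite_description _ (H j))).
by move=> j; exact: (proj2_sig (constructive_indefinite_description _ (H j))).
Qed.

Definition Pol (x : D) (N : nat) (d : D) :=
  exists r : nat -> D, (forall j, R (r j)) /\ d = \sum_(j < N) x ^+ j * r j.
Definition PolA x d := exists N, Pol x N d.

Lemma Pol_lmul x N s d : nr x -> R s -> Pol x N d -> Pol x N (s * d).
Proof.
move=> hx hs [r [hr ->]].
have [f hf] := fchoice (fun j => nrX j hx hs).
exists (fun j => f j * r j); split; first by move=> j; apply: RM => //; case: (hf j).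
rewrite mulr_sumr; apply: eq_bigr => j _.
by case: (hf j) => _ e; rewrite mulrA e mulrA.
Qed.

Lemma Pol_rmul x N s d : R s -> Pol x N d -> Pol x N (d * s).
Proof.
move=> hs [r [hr ->]]; exists (fun j => r j * s); split; first by move=> j; apply: RM.
by rewrite mulr_suml; apply: eq_bigr => j _; rewrite mulrA.
Qed.

Lemma Pol_sub x N d e : Pol x N d -> Pol x N e -> Pol x N (d - e).
Proof.
move=> [r [hr ->]] [s [hs ->]]; exists (fun j => r j - s j); split; first by move=> j; apply: RB.
by rewrite -sumrB; apply: eq_bigr => j _; rewrite mulrBr.
Qed.

Lemma Pol_add x N d e : Pol x N d -> Pol x N e -> Pol x N (d + e).
Proof.
move=> [r [hr ->]] [s [hs ->]]; exists (fun j => r j + s j); split; first by move=> j; apply: RD.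
by rewrite -big_split; apply: eq_bigr => j _; rewrite mulrDr.
Qed.

Lemma Pol_pad x N M d : (N <= M)%N -> Pol x N d -> Pol x M d.
Proof.
move=> hNM [r [hr ->]].
exists (fun j => if (j < N)%N then r j else 0); split.
  by move=> j; case: (j < N)%N; [apply: hr|apply: R0].
rewrite (big_ord_widen M (fun j => x ^+ j * r j) hNM) big_mkcond.
by apply: eq_bigr => j _; case: (j < N)%N => //; rewrite mulr0.
Qed.

Lemma PolA_sub x d e : PolA x d -> PolA x e -> PolA x (d - e).
Proof.
move=> [N hd] [M he]; exists (N + M)%N; apply: Pol_sub.
  by apply: (Pol_pad (leq_addr M N)).
by apply: (Pol_pad (leq_addl N M)).
Qed.

Lemma Pol_shift x N d : Pol x N d -> Pol x N.+1 (x * d).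
Proof.
move=> [r [hr ->]].
exists (fun j => if j is j'.+1 then r j' else 0); split.
  by case => [|j] //; apply: R0.
rewrite big_ord_recl /= mulr0 add0r mulr_sumr; apply: eq_bigr => j _.
by rewrite exprS mulrA.
Qed.

Lemma Pol_one x N : Pol x N.+1 1.
Proof.
apply: (@Pol_pad x 1); first by [].
exists (fun _ => 1); split; first by move=> _; apply: R1.
by rewrite big_ord1 expr0 mulr1.
Qed.

Definition Idl (P : D -> Prop) (y : D) := forall d, P d -> P (y * d).

Lemma Idl_sub P : (forall d e, P d -> P e -> P (d - e)) -> is_subring (Idl P).
Proof.
move=> hP; split; first by move=> d hd; rewrite mul1r.
split; first by move=> y z hy hz d hd; rewrite mulrBl; apply: hP; [apply: hy|apply: hz].
by move=> y z hy hz d hd; rewrite -mulrA; apply: hy; apply: hz.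
Qed.

Lemma max_all S : is_subring S -> (forall x, R x -> S x) -> forall y, S y -> ~ R y ->
  forall d, S d.
Proof.
move=> hS hRS y hy nRy d; apply: NNPP => nd.
case: hmax => _ [_ hm]; apply: nRy; apply: (hm S hS hRS _ y hy).
by exists d.
Qed.

Lemma step1 l : normalizes R l -> ~ R l -> exists N, Pol l N l^-1.
Proof.
move=> hl nl.
have hsub := Idl_sub (@PolA_sub l).
have hRS : forall x, R x -> Idl (PolA l) x.
  by move=> x hx d [N hd]; exists N; apply: Pol_lmul => //; apply: norm_nr.
have hlI : Idl (PolA l) l by move=> d [N hd]; exists N.+1; apply: Pol_shift.
have := max_all hsub hRS hlI nl (l^-1) 1 (ex_intro _ 1%N (Pol_one l 0%N)).
by rewrite mulr1.
Qed.

Lemma mu_pow (l : D) K j : l \is a GRing.unit -> (j <= K)%N ->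
  l^-1 ^+ K * l ^+ j = l^-1 ^+ (K - j).
Proof.
move=> hl hjK.
by rewrite -{1}(subnK hjK) exprD -mulrA [X in _ * (X * _)]exprVn mulVr ?mulr1 // unitrX.
Qed.

Lemma step2 (l : D) N : l \is a GRing.unit -> Pol l N l^-1 ->
  exists K, N = K.+1 /\ Pol l^-1 N (l^-1 ^+ N).
Proof.
move=> hl [r [hr e]].
case: N r hr e => [|K] r hr e.
  by exfalso; move: e; rewrite big_ord0 => /eqP; rewrite invr_eq0 => /eqP h; move: hl; rewrite h unitr0.
exists K; split => //.
exists (fun j => r (K - j)%N); split; first by move=> j; apply: hr.
rewrite exprSr {2}e mulr_sumr.
rewrite (reindex_inj rev_ord_inj) /=; apply: eq_bigr => j _.
rewrite mulrA mu_pow //; last by rewrite subSS leq_subr.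
rewrite subSS subKn //; by rewrite -ltnS ltn_ord.
Qed.

Lemma reduce (x : D) N d : Pol x N (x ^+ N) -> Pol x N.+1 d -> Pol x N d.
Proof.
move=> hN [r [hr ->]].
rewrite big_ord_recr /=; apply: Pol_add; last by apply: Pol_rmul.
by exists r.
Qed.

Lemma nakayama k (g : nat -> D) :
  ~ (forall d, exists r : nat -> D, (forall j, R (r j)) /\ d = \sum_(j < k) g j * r j).
Proof.
elim: k => [|k IH] H.
  case: (H 1) => r [_ e]; move: e; rewrite big_ord0 => /eqP; apply/negP; apply: oner0.
apply: IH => d.
case: (H (g k * a^-1)) => c [hc ec].
rewrite big_ord_recr /= in ec.
set S := \sum_(j < k) g j * c j in ec.
case: (unit_1sa (hc k)) => w [hw ew].
set u := 1 - c k * a in ew.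
have uU : u \is a GRing.unit.
  apply: unitD; apply/eqP => u0; move: ew; rewrite u0 mulr0 => /eqP; rewrite eq_sym; apply/negP; apply: oner0.
have ew' : u * w = 1 by rewrite (left_inv uU ew) mulrV.
have e1 : g k * u = S * a.
  have eg : g k = S * a + g k * c k * a by rewrite -mulrDl -ec mulrVK // aU.
  by rewrite /u mulrBr mulr1 mulrA {1}eg addrK.
have e2 : g k = \sum_(j < k) g j * (c j * a * w).
  rewrite -{1}(mulr1 (g k)) -ew' mulrA e1 /S !mulr_suml; apply: eq_bigr => j _.
  by rewrite !mulrA.
case: (H d) => f [hf ed].
rewrite big_ord_recr /= e2 mulr_suml -big_split /= in ed.
exists (fun j => f j + c j * a * w * f k); split.
  by move=> j; apply: RD => //; apply: RM => //; apply: RM => //; apply: RM.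
by rewrite ed; apply: eq_bigr => j _; rewrite mulrDr !mulrA.
Qed.

Lemma part6 l : N_of R l -> R l \/ R l^-1.
Proof.
move=> hl.
case: (eqVneq l 0) => [->|l0]; first by left; apply: R0.
case: (classic (R l)) => hRl; [by left|right].
have lU : l \is a GRing.unit by apply: unitD.
case: (step1 hl hRl) => N hN.
case: (step2 lU hN) => K [eN hP].
apply: NNPP => nmu.
have nrmu : nr l^-1 by apply: nrV => //; apply: norm_nl.
have hsub := Idl_sub (@Pol_sub l^-1 N).
have hRS : forall x, R x -> Idl (Pol l^-1 N) x.
  by move=> x hx d hd; apply: Pol_lmul.
have hmI : Idl (Pol l^-1 N) l^-1.
  by move=> d hd; apply: reduce => //; apply: Pol_shift.
have hall := max_all hsub hRS hmI nmu.
apply: (@nakayama N (fun j => l^-1 ^+ j)) => d.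
have := hall d 1; rewrite mulr1; apply; rewrite eN; apply: Pol_one.
Qed.


Lemma main_in :
  let X := fun y : D => exists n : nat, y = a ^+ n in
  (left_ore_set R X /\ right_ore_set R X /\
   (forall d : D, exists (n : nat) (r : D), R r /\ d = a ^- n * r) /\
   (forall d : D, exists (n : nat) (r : D), R r /\ d = r * a ^- n)) /\
  ((forall I, left_ideal R I -> nonzero_set I -> exists n : nat, I (a ^+ n)) /\
   (forall I, right_ideal R I -> nonzero_set I -> exists n : nat, I (a ^+ n)) /\
   udim_left_one R /\ udim_right_one R /\ ore_domain_with_quotients R) /\
  (forall P, prime_ideal R P -> nonzero_set P -> P a) /\
  jacobson R a /\
  (non_simple R /\ G_domain R) /\
  (forall l : D, N_of R l -> R l \/ R l^-1).
Proof using hdiv hmax Ra a0 anu anorm.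
move=> X.
have hms : mult_subset R X.
  split; first by move=> x [n ->]; apply: RX.
  split; first by exists 0%N; rewrite expr0.
  by move=> x y [n ->] [m ->]; exists (n + m)%N; rewrite exprD.
split.
  split.
    split => //; split.
      move=> r x hr [n ->]; case: (anl n hr) => r' [hr' e].
      by exists r', (a ^+ n); split => //; split => //; exists n.
    move=> r x hr [n ->] e; case: (domD e) => [->|h].
      by exists 1; split; [exists 0%N; rewrite expr0|rewrite mulr0].
    by exfalso; move: (aX0 n); rewrite h eqxx.
  split.
    split => //; split.
      move=> r x hr [n ->]; case: (anr n hr) => r' [hr' e].
      by exists r', (a ^+ n); split => //; split => //; exists n.
    move=> r x hr [n ->] e; case: (domD e) => [h|->].
      by exfalso; move: (aX0 n); rewrite h eqxx.
    by exists 1; split; [exists 0%N; rewrite expr0|rewrite mul0r].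
  by split; [apply: DSl|apply: DSr].
split.
  split; first exact: left_pow.
  split; first exact: right_pow.
  by split; [apply: udimL|split; [apply: udimR|apply: oreQ]].
split; first exact: prime_a.
split; first exact: jac.
split; first by split; [apply: nonsimple|apply: Gdom].
exact: part6.
Qed.

End Main.
Unset Implicit Arguments.

Theorem theorem2p4 (D : unitRingType) (R : D -> Prop) (a : D) :
  is_division_ring D -> noncommutative D -> maximal_subring R ->
  R a -> a != 0 -> ~ unit_in R a -> normalizes R a ->
  let X := fun y : D => exists n : nat, y = a ^+ n in
  (* (1) *)
  (left_ore_set R X /\ right_ore_set R X /\
   (forall d : D, exists (n : nat) (r : D), R r /\ d = a ^- n * r) /\
   (forall d : D, exists (n : nat) (r : D), R r /\ d = r * a ^- n)) /\
  (* (2) *)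
  ((forall I, left_ideal R I -> nonzero_set I -> exists n : nat, I (a ^+ n)) /\
   (forall I, right_ideal R I -> nonzero_set I -> exists n : nat, I (a ^+ n)) /\
   udim_left_one R /\ udim_right_one R /\ ore_domain_with_quotients R) /\
  (* (3) *)
  (forall P, prime_ideal R P -> nonzero_set P -> P a) /\
  (* (4) *)
  jacobson R a /\
  (* (5) *)
  (non_simple R /\ G_domain R) /\
  (* (6) *)
  (forall l : D, N_of R l -> R l \/ R l^-1).
Proof.
move=> hd _ hm hRa ha0 hnu hn.
exact: (main_in hd hm hRa ha0 hnu hn).
Qed.
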